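(* Every Cartan–Eilenberg system (respectively, every left Cartan–Eilenberg system) $(H,\partial)$ can be prolonged to a right (respectively extended) Cartan–Eilenberg system whose right couple $(A'',E^1)$ converges conditionally to its limit, namely by setting $H(i,\infty)=\operatorname{colim}_jH(i,j)$ for each $i$, with $\eta$ and $\partial$ involving $\infty$ obtained by passing to colimits over $k$ in the exact triangles for $(i,j,k)$. This prolongation is essentially unique: for any prolongation of $(H,\partial)$ to a right (respectively extended) Cartan–Eilenberg system whose right couple converges conditionally to its limit, the canonical maps $\operatorname{colim}_jH(i,j)\to H(i,\infty)$ are isomorphisms.
   Context: Let $\mathcal{A}$ be the category of $\mathbb{Z}$-graded $R$-modules. For a linearly ordered set $\mathcal{I}$, an $\mathcal{I}$-system $(H,\partial)$ consists of objects $H(i,j)$ for $i\le j$ in $\mathcal{I}$, functorial morphisms $\eta\colon H(i,j)\to H(i',j')$ (internal degree $0$) for $i\le i'$, $j\le j'$, and natural morphisms $\partial\colon H(j,k)\to H(i,j)$ (internal degree $-1$) for $i\le j\le k$, with $H(i,j)\xrightarrow{\eta}H(i,k)\xrightarrow{\eta}H(j,k)\xrightarrow{\partial}H(i,j)$ exact at each vertex. Cartan–Eilenberg system: $\mathbb{Z}$-system; right: $(\mathbb{Z}\cup\{+\infty\})$-system; left: $(\mathbb{Z}\cup\{-\infty\})$-system; extended: $(\mathbb{Z}\cup\{\pm\infty\})$-system. A prolongation is a system on the larger index set whose restriction is the given one. Right couple: $A''_s=H(s,\infty)$, $E^1_s=H(s-1,s)$, $\alpha_s=\eta$, $\beta_s=\partial\colon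 H(s,\infty)\to H(s-1,s)$, $\gamma_s=\eta\colon H(s-1,s)\to H(s-1,\infty)$; it converges conditionally to the limit if $\operatorname{colim}_sA''_s=0$. *)

(* Defs.v *)
From HB Require Import structures.
From mathcomp Require Import all_boot all_order all_algebra.
Set Implicit Arguments.
Unset Strict Implicit.
Unset Printing Implicit Defensive.
Import Order.TTheory GRing.Theory Num.Theory.
Local Open Scope ring_scope.

(* The index set Z ∪ {-oo, +oo}; Z, Z∪{+oo}, Z∪{-oo} are the sub-orders
   cut out by the predicates isFin, notNInf, notPInf. *)
Inductive ext : Type := NInf | Fin of int | PInf.

Definition ele (a b : ext) : bool :=
  match a, b with
  | NInf, _ => true
  | _, PInf => true
  | Fin i, Fin j => (i <= j)%R
  | _, _ => false
  end.

Definition isFin (a : ext) : bool := if a is Fin _ then true else false.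
Definition notNInf (a : ext) : bool := if a is NInf then false else true.
Definition notPInf (a : ext) : bool := if a is PInf then false else true.
Definition allExt (a : ext) : bool := true.

Definition islin (R : pzRingType) (U V : lmodType R) (f : U -> V) : Prop :=
  forall (a : R) (x y : U), f (a *: x + y) = a *: f x + f y.

(* A Z-graded R-module is
   a family  int -> lmodType R  (degree n component).  eta a b c d is the
   degree-0 map H(a,b) -> H(c,d); del a b c is the degree -1 map
   H(b,c) -> H(a,b), written degreewise as H(b,c)_(n+1) -> H(a,b)_n.
   Values at irrelevant indices are junk and constrained by nothing. *)
Record sysdata (R : pzRingType) : Type := SysData {
  H : ext -> ext -> int -> lmodType R;
  eta : forall (a b c d : ext) (n : int), H a b n -> H c d n;
  del : forall (a b c : ext) (n : int), H b c (n + 1) -> H a b n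
}.
Arguments H {R} s _ _ _.
Arguments eta {R} s _ _ _ _ _ _.
Arguments del {R} s _ _ _ _ _.

Definition is_system (R : pzRingType) (P : ext -> bool) (D : sysdata R) : Prop :=
  (forall a b c d n, P a -> P b -> P c -> P d -> ele a b -> ele c d ->
      ele a c -> ele b d -> islin (eta D a b c d n)) /\
  (forall a b c n, P a -> P b -> P c -> ele a b -> ele b c ->
      islin (del D a b c n)) /\
  (forall a b n x, P a -> P b -> ele a b -> eta D a b a b n x = x) /\
  (forall a b c d e f n x, P a -> P b -> P c -> P d -> P e -> P f ->
      ele a b -> ele c d -> ele e f -> ele a c -> ele b d -> ele c e -> ele d f ->
      eta D c d e f n (eta D a b c d n x) = eta D a b e f n x) /\
  (forall a b c a' b' c' n x, P a -> P b -> P c -> P a' -> P b' -> P c' ->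
      ele a b -> ele b c -> ele a' b' -> ele b' c' ->
      ele a a' -> ele b b' -> ele c c' ->
      eta D a b a' b' n (del D a b c n x) = del D a' b' c' n (eta D b c b' c' (n + 1) x)) /\
  (forall a b c, P a -> P b -> P c -> ele a b -> ele b c ->
     (forall n (y : H D a c n),
        eta D a c b c n y = 0 <-> exists x : H D a b n, eta D a b a c n x = y) /\
     (forall n (y : H D b c (n + 1)),
        del D a b c n y = 0 <-> exists x : H D a c (n + 1), eta D a c b c (n + 1) x = y) /\
     (forall n (y : H D a b n),
        eta D a b a c n y = 0 <-> exists x : H D b c (n + 1), del D a b c n x = y)).

Definition CE_system R := @is_system R isFin.
Definition right_CE_system R := @is_system R notNInf.
Definition left_CE_system R := @is_system R notPInf.
Definition extended_CE_system R := @is_system R allExt.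

Definition IsColim (R : pzRingType) (Dm : int -> bool)
    (X : int -> int -> lmodType R)
    (f : forall (j j' n : int), X j n -> X j' n)
    (C : int -> lmodType R) (c : forall (j n : int), X j n -> C n) : Prop :=
  (forall j n, Dm j -> islin (c j n)) /\
  (forall j j' n x, Dm j -> Dm j' -> (j <= j')%R -> c j' n (f j j' n x) = c j n x) /\
  forall (T : int -> lmodType R) (g : forall (j n : int), X j n -> T n),
    (forall j n, Dm j -> islin (g j n)) ->
    (forall j j' n x, Dm j -> Dm j' -> (j <= j')%R -> g j' n (f j j' n x) = g j n x) ->
    exists u : forall n, C n -> T n,
      (forall n, islin (u n)) /\
      (forall j n x, Dm j -> u n (c j n x) = g j n x) /\
      (forall u' : forall n, C n -> T n,
         (forall n, islin (u' n)) ->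
         (forall j n x, Dm j -> u' n (c j n x) = g j n x) ->
         forall n y, u' n y = u n y).

Arguments IsColim {R} Dm X f C c.

Definition is_prolongation (R : pzRingType) (P : ext -> bool) (D D' : sysdata R)
    (phi : forall a b n, H D a b n -> H D' a b n) : Prop :=
  (forall a b n, P a -> P b -> ele a b -> islin (phi a b n) /\ bijective (phi a b n)) /\
  (forall a b c d n x, P a -> P b -> P c -> P d -> ele a b -> ele c d ->
     ele a c -> ele b d ->
     phi c d n (eta D a b c d n x) = eta D' a b c d n (phi a b n x)) /\
  (forall a b c n x, P a -> P b -> P c -> ele a b -> ele b c ->
     phi a b n (del D a b c n x) = del D' a b c n (phi b c (n + 1) x)).

Arguments is_prolongation {R} P D D' phi.

(* The right couple A''_s = H(s,+oo), alpha_s = eta, converges conditionally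
   to the limit: colim_s A''_s = 0 (every colimit of the sequence is zero). *)
Definition cond_conv (R : pzRingType) (D : sysdata R) : Prop :=
  forall (C : int -> lmodType R) (c : forall (s n : int), H D (Fin s) PInf n -> C n),
    IsColim (fun _ => true) (fun s => H D (Fin s) PInf)
            (fun s t => eta D (Fin s) PInf (Fin t) PInf) C c ->
    forall n (y : C n), y = 0.

Definition row_dom (i : ext) : int -> bool := fun j => ele i (Fin j).

Definition row_cocone (R : pzRingType) (D D' : sysdata R)
    (phi : forall a b n, H D a b n -> H D' a b n) (i : ext) :
    forall (j n : int), H D i (Fin j) n -> H D' i PInf n :=
  fun j n x => eta D' i (Fin j) i PInf n (phi i (Fin j) n x).

Arguments row_cocone {R} D D' phi i j n x.

Definition prolongation_statement (R : pzRingType) (P Q : ext -> bool)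
    (D : sysdata R) : Prop :=
  (exists (D' : sysdata R) (phi : forall a b n, H D a b n -> H D' a b n),
      is_system Q D' /\ is_prolongation P D D' phi /\ cond_conv D' /\
      forall i, P i ->
        IsColim (row_dom i) (fun j => H D i (Fin j))
                (fun j j' => eta D i (Fin j) i (Fin j'))
                (H D' i PInf) (row_cocone D D' phi i)) /\
  (forall (D' : sysdata R) (phi : forall a b n, H D a b n -> H D' a b n),
      is_system Q D' -> is_prolongation P D D' phi -> cond_conv D' ->
      forall i, P i ->
      forall (C : int -> lmodType R) (c : forall (j n : int), H D i (Fin j) n -> C n),
        IsColim (row_dom i) (fun j => H D i (Fin j))
                (fun j j' => eta D i (Fin j) i (Fin j')) C c ->
      forall u : forall n, C n -> H D' i PInf n,
        (forall n, islin (u n)) ->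
        (forall j n x, row_dom i j -> u n (c j n x) = row_cocone D D' phi i j n x) ->
        forall n, bijective (u n)).

(* Main.v *)
Require Import Defs.
From HB Require Import structures.
From mathcomp Require Import all_boot all_order all_algebra.
From mathcomp Require Import boolp zify.
From Stdlib Require Import ClassicalEpsilon ProofIrrelevance.
Import Defs.
Module ColM.
Import Order.TTheory GRing.Theory Num.Theory.
Local Open Scope ring_scope.
Set Implicit Arguments.
Unset Strict Implicit.
Unset Printing Implicit Defensive.

Lemma lin0 (R : pzRingType) (U V : lmodType R) (g : U -> V) : islin g -> g 0 = 0.
Proof. move=> hg; have := hg 1 0 0; rewrite scaler0 addr0 scale1r => e2.
by apply: (addrI (g 0)); rewrite addr0 -e2. Qed.
Lemma linD (R : pzRingType) (U V : lmodType R) (g : U -> V) : islin g -> forall x y, g (x + y) = g x + g y.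
Proof. by move=> hg x y; have := hg 1 x y; rewrite !scale1r. Qed.
Lemma linZ (R : pzRingType) (U V : lmodType R) (g : U -> V) : islin g -> forall a x, g (a *: x) = a *: g x.
Proof. by move=> hg a x; have := hg a x 0; rewrite !addr0 (lin0 hg) addr0. Qed.
Lemma linN (R : pzRingType) (U V : lmodType R) (g : U -> V) : islin g -> forall x, g (- x) = - g x.
Proof. by move=> hg x; rewrite -scaleN1r (linZ hg) scaleN1r. Qed.
Lemma linB (R : pzRingType) (U V : lmodType R) (g : U -> V) : islin g -> forall x y, g (x - y) = g x - g y.
Proof. by move=> hg x y; rewrite (linD hg) (linN hg). Qed.

Lemma sig_eqP (A : Type) (Pr : A -> Prop) (x y : sig Pr) : proj1_sig x = proj1_sig y -> x = y.
Proof. case: x => x px; case: y => y py /= e; subst y; f_equal; apply: proof_irrelevance. Qed.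

Section Colim.
Variables (R : pzRingType) (Dm : int -> bool) (X : int -> lmodType R)
  (f : forall j j' : int, X j -> X j').
Arguments f : clear implicits.

Record colhyp : Prop := ColHyp {
  ch_up : forall j j' : int, Dm j -> j <= j' -> Dm j';
  ch_ne : exists j, Dm j;
  ch_lin : forall j j' : int, Dm j -> j <= j' -> islin (f j j');
  ch_comp : forall (j k l : int) x, Dm j -> j <= k -> k <= l -> f k l (f j k x) = f j l x }.

Variable h : colhyp.

Definition cT := {j : int & X j}.
Definition crel (p q : cT) : Prop := Dm (tag p) /\ Dm (tag q) /\
  exists m, forall k, m <= k -> tag p <= k -> tag q <= k ->
     f (tag p) k (tagged p) = f (tag q) k (tagged q).

Lemma crel_refl p : Dm (tag p) -> crel p p.
Proof. by move=> d; split=> //; split=> //; exists 0. Qed.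
Lemma crel_sym p q : crel p q -> crel q p.
Proof. by case=> [d1 [d2 [m hm]]]; split=> //; split=> //; exists m => k *; rewrite hm. Qed.
Lemma crel_trans p q r : crel p q -> crel q r -> crel p r.
Proof.
case=> [d1 [d2 [m1 h1]]] [_ [d3 [m2 h2]]]; split=> //; split=> //.
exists (Num.max (Num.max m1 m2) (tag q)) => k hk hp hr.
rewrite h1 ?h2 //; lia.
Qed.

Definition colT := {S : cT -> Prop | exists p, Dm (tag p) /\ S = crel p}.

Definition j0 : int := xchoose (ch_ne h).
Lemma j0P : Dm j0. Proof. exact: (xchooseP (ch_ne h)). Qed.

Definition cls (p : cT) : colT :=
  (match Dm (tag p) as b return Dm (tag p) = b -> colT with
   | true => fun e => exist _ (crel p) (ex_intro _ p (conj e erefl))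
   | false => fun _ => exist _ (crel (existT X j0 0)) (ex_intro _ (existT X j0 0) (conj j0P erefl))
   end) (erefl (Dm (tag p))).

Lemma val_cls p : Dm (tag p) -> proj1_sig (cls p) = crel p.
Proof.
move=> d; rewrite /cls; generalize (erefl (Dm (tag p))).
generalize (Dm (tag p)) at 2 3; case=> //= e.
by rewrite d in e.
Qed.

Lemma cls_eq p q : Dm (tag p) -> Dm (tag q) -> (cls p = cls q <-> crel p q).
Proof.
move=> dp dq; split.
  move=> /(f_equal (@proj1_sig _ _)); rewrite !val_cls // => e.
  by rewrite e; apply: crel_refl.
move=> pq; apply: sig_eqP; rewrite !val_cls //.
apply: funext => r; apply: propext; split => hr.
  exact: crel_trans (crel_sym pq) hr.
exact: crel_trans pq hr.
Qed.

Definition crep (y : colT) : cT :=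
  proj1_sig (constructive_indefinite_description _ (proj2_sig y)).
Lemma crepP y : Dm (tag (crep y)) /\ y = cls (crep y).
Proof.
rewrite /crep; case: constructive_indefinite_description => p [dp e] /=.
split=> //; apply: sig_eqP; by rewrite val_cls.
Qed.

Definition mk (j : int) (x : X j) : cT := existT X j x.

Lemma push j k x : Dm j -> j <= k -> cls (mk x) = cls (mk (f j k x)).
Proof.
move=> dj jk; have dk := ch_up h dj jk.
apply/cls_eq => //; split=> //; split=> //; exists k => l kl _ _ /=.
by rewrite (ch_comp h).
Qed.

Definition mx (a b : int) := Num.max a b.
Lemma mxl a b : a <= mx a b. Proof. rewrite /mx; lia. Qed.
Lemma mxr a b : b <= mx a b. Proof. rewrite /mx; lia. Qed.

Definition op1 (g : forall k, X k -> X k) (y : colT) : colT :=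
  let p := crep y in cls (mk (g (tag p) (tagged p))).
Definition op2 (g : forall k, X k -> X k -> X k) (y z : colT) : colT :=
  let p := crep y in let q := crep z in let k := mx (tag p) (tag q) in
  cls (mk (g k (f (tag p) k (tagged p)) (f (tag q) k (tagged q)))).

Definition natural1 (g : forall k, X k -> X k) :=
  forall k l x, Dm k -> k <= l -> f k l (g k x) = g l (f k l x).
Definition natural2 (g : forall k, X k -> X k -> X k) :=
  forall k l x y, Dm k -> k <= l -> f k l (g k x y) = g l (f k l x) (f k l y).

Lemma rep_rel k x : Dm k -> crel (crep (cls (mk x))) (mk (j := k) x).
Proof.
move=> dk; case: (crepP (cls (mk x))) => dp e.
by apply/cls_eq => //; rewrite -e.
Qed.

Lemma op1E g k x : natural1 g -> Dm k -> op1 g (cls (mk x)) = cls (mk (g k x)).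
Proof.
move=> ng dk; rewrite /op1; have := rep_rel x dk.
case: (crep _) => j u [dj [_ [m hm]]] /=.
apply/cls_eq => //; split=> //; split=> //; exists m => l ml jl kl /=.
by rewrite !ng // hm.
Qed.

Lemma op2E g k x y : natural2 g -> Dm k -> op2 g (cls (mk x)) (cls (mk y)) = cls (mk (g k x y)).
Proof.
move=> ng dk; rewrite /op2; have := rep_rel x dk; have := rep_rel y dk.
case: (crep (cls (mk y))) => j2 u2 [dj2 [_ [m2 hm2]]].
case: (crep (cls (mk x))) => j1 u1 [dj1 [_ [m1 hm1]]] /=.
have dk' : Dm (mx j1 j2) by apply: (ch_up h dj1); apply: mxl.
apply/cls_eq => //; split=> //; split=> //.
exists (Num.max (Num.max m1 m2) (mx j1 j2)) => l hl kl kl2 /=.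
simpl in kl2; rewrite /mx in hl.
have h1 : mx j1 j2 <= l by rewrite /mx; lia.
rewrite ng // !(ch_comp h) //; try exact: mxl; try exact: mxr.
rewrite ng //.
have e1 := hm1 l; have e2 := hm2 l; simpl in e1, e2.
rewrite e1 ?e2 //; lia.
Qed.

Lemma at1 y : exists j x, Dm j /\ y = cls (mk (j := j) x).
Proof. case: (crepP y); case: (crep y) => j x d e; by exists j, x. Qed.

Lemma atk (y : colT) (b : int) : exists k x, Dm k /\ b <= k /\ y = cls (mk (j := k) x).
Proof.
case: (at1 y) => j [x [dj ->]]; exists (mx j b), (f j (mx j b) x).
split; first exact: (ch_up h dj (mxl _ _)).
by split; [exact: mxr | exact: push (mxl _ _)].
Qed.

Lemma at2 y z : exists k x1 x2, Dm k /\ y = cls (mk (j := k) x1) /\ z = cls (mk (j := k) x2).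
Proof.
case: (at1 y) => j [x [dj ->]]; case: (atk z j) => k [x2 [dk [jk ->]]].
by exists k, (f j k x), x2; split => //; split => //; apply: push.
Qed.

Lemma at3 y z w : exists k x1 x2 x3, Dm k /\ y = cls (mk (j := k) x1) /\
  z = cls (mk (j := k) x2) /\ w = cls (mk (j := k) x3).
Proof.
case: (at2 y z) => j [x1 [x2 [dj [-> ->]]]]; case: (atk w j) => k [x3 [dk [jk ->]]].
exists k, (f j k x1), (f j k x2), x3; split => //.
by split; [|split]; rewrite ?(push _ dj jk).
Qed.

Definition czero : colT := cls (mk (j := j0) 0).
Lemma czeroE k : Dm k -> czero = cls (mk (j := k) 0).
Proof.
move=> dk; apply/cls_eq => //; first exact: j0P.
split; first exact: j0P; split => //; exists 0 => l _ hl hk /=.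
by rewrite !(lin0 (ch_lin h _ _)) //; exact: j0P.
Qed.

Definition cadd := op2 (fun k x y => x + y).
Definition copp := op1 (fun k x => - x).
Definition cscale (a : R) := op1 (fun k x => a *: x).

Lemma nat_add : natural2 (fun k x y => x + y).
Proof. by move=> k l x y dk kl; rewrite (linD (ch_lin h dk kl)). Qed.
Lemma nat_opp : natural1 (fun k x => - x).
Proof. by move=> k l x dk kl; rewrite (linN (ch_lin h dk kl)). Qed.
Lemma nat_scale a : natural1 (fun k x => a *: x).
Proof. by move=> k l x dk kl; rewrite (linZ (ch_lin h dk kl)). Qed.

Lemma caddE k x y : Dm k -> cadd (cls (mk (j := k) x)) (cls (mk y)) = cls (mk (x + y)).
Proof. move=> dk; exact: (op2E _ _ nat_add dk). Qed.
Lemma coppE k x : Dm k -> copp (cls (mk (j := k) x)) = cls (mk (- x)).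
Proof. move=> dk; exact: (op1E _ nat_opp dk). Qed.
Lemma cscaleE a k x : Dm k -> cscale a (cls (mk (j := k) x)) = cls (mk (a *: x)).
Proof. move=> dk; exact: (op1E _ (nat_scale a) dk). Qed.

Lemma caddA : associative cadd.
Proof. move=> y z w; case: (at3 y z w) => k [x1 [x2 [x3 [dk [-> [-> ->]]]]]].
by rewrite !caddE // addrA. Qed.
Lemma caddC : commutative cadd.
Proof. move=> y z; case: (at2 y z) => k [x1 [x2 [dk [-> ->]]]]. by rewrite !caddE // addrC. Qed.
Lemma cadd0 : left_id czero cadd.
Proof. move=> y; case: (at1 y) => k [x [dk ->]]. by rewrite (czeroE dk) caddE // add0r. Qed.
Lemma caddN : left_inverse czero copp cadd.
Proof. move=> y; case: (at1 y) => k [x [dk ->]]. by rewrite coppE // caddE // addNr (czeroE dk). Qed.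

HB.instance Definition _ := gen_eqMixin colT.
HB.instance Definition _ := gen_choiceMixin colT.
HB.instance Definition _ := GRing.isZmodule.Build colT caddA caddC cadd0 caddN.

Lemma cscaleA a b v : cscale a (cscale b v) = cscale (a * b) v.
Proof. case: (at1 v) => k [x [dk ->]]; by rewrite !cscaleE // scalerA. Qed.
Lemma cscale1 : left_id 1 cscale.
Proof. move=> v; case: (at1 v) => k [x [dk ->]]; by rewrite !cscaleE // scale1r. Qed.
Lemma cscaleDr : right_distributive cscale +%R.
Proof. move=> a y z; case: (at2 y z) => k [x1 [x2 [dk [-> ->]]]].
by rewrite /GRing.add /= !caddE // !cscaleE // caddE // scalerDr. Qed.
Lemma cscaleDl v : {morph cscale^~ v: a b / a + b}.
Proof. move=> a b; case: (at1 v) => k [x [dk ->]] /=.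
by rewrite /GRing.add /= !cscaleE // caddE // scalerDl. Qed.

HB.instance Definition _ := GRing.Zmodule_isLmodule.Build R colT cscaleA cscale1 cscaleDr cscaleDl.

Definition Col : lmodType R := colT.

Definition cinj (j : int) (x : X j) : Col := cls (mk x).
Arguments cinj : clear implicits.

Lemma cinj_lin j : Dm j -> islin (cinj j).
Proof.
move=> dj a x y; rewrite /cinj.
have -> : a *: (cls (mk x) : Col) = cls (mk (a *: x)) by exact: cscaleE.
symmetry; exact: caddE.
Qed.

Lemma cinj_compat j j' x : Dm j -> j <= j' -> cinj j' (f j j' x) = cinj j x.
Proof. by move=> dj jj; rewrite /cinj (push x dj jj). Qed.

Lemma cinj_surj (y : Col) : exists j x, Dm j /\ y = cinj j x.
Proof. exact: at1. Qed.

Lemma cinj_ker j x : Dm j -> cinj j x = 0 -> exists m, forall k, m <= k -> j <= k -> f j k x = 0.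
Proof.
move=> dj; have -> : (0 : Col) = cls (mk (j := j) 0) by exact: czeroE.
move/cls_eq => /(_ dj dj) [_ [_ [m hm]]]; exists m => k mk jk.
by rewrite (hm k mk jk jk) /= (lin0 (ch_lin h dj jk)).
Qed.

Section Lift.
Variables (T : lmodType R) (g : forall j, X j -> T).
Arguments g : clear implicits.
Hypothesis gc : forall j j' x, Dm j -> j <= j' -> g j' (f j j' x) = g j x.
Definition clift (y : Col) : T := g (tag (crep y)) (tagged (crep y)).

Lemma clift_inj j x : Dm j -> clift (cinj j x) = g j x.
Proof.
move=> dj; rewrite /clift /cinj; have := rep_rel x dj.
case: (crep _) => j1 u1 [dj1 [_ [m hm]]] /=.
have := hm (Num.max (Num.max m j1) j) ltac:(lia) ltac:(simpl; lia) ltac:(simpl; lia).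
simpl => e; rewrite -(gc u1 dj1 (_ : j1 <= Num.max (Num.max m j1) j)); last by lia.
by rewrite e gc //; lia.
Qed.

Lemma clift_lin : (forall j, Dm j -> islin (g j)) -> islin clift.
Proof.
move=> gl a y z; case: (at2 y z) => k [x1 [x2 [dk [-> ->]]]].
rewrite -/(cinj k x1) -/(cinj k x2) -(cinj_lin dk) !clift_inj //.
exact: gl.
Qed.

Lemma clift_unique (u : Col -> T) : (forall j x, Dm j -> u (cinj j x) = g j x) ->
  forall y, u y = clift y.
Proof. move=> hu y; case: (cinj_surj y) => j [x [dj ->]]; by rewrite hu // clift_inj. Qed.
End Lift.
End Colim.

Arguments colhyp {R} Dm X f.
Arguments Col {R Dm X f} h.
Arguments cinj {R Dm X f} h j x.
Arguments clift {R Dm X f} h {T} g y.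

Lemma IsColim_Col (R : pzRingType) (Dm : int -> bool) (X : int -> int -> lmodType R)
  (f : forall j j' n, X j n -> X j' n)
  (hh : forall n, colhyp Dm (fun j => X j n) (fun j j' => f j j' n)) :
  IsColim Dm X f (fun n => Col (hh n)) (fun j n => cinj (hh n) j).
Proof.
split; first by move=> j n dj; apply: cinj_lin.
split; first by move=> j j' n x dj jj; apply: cinj_compat.
move=> T g gl gc; exists (fun n => clift (hh n) (g^~ n)).
have gc' : forall n j j' x, Dm j -> j <= j' -> g j' n (f j j' n x) = g j n x.
  by move=> n j j' x dj jj; apply: gc => //; exact: (ch_up (hh n) dj jj).
split; first by move=> n; apply: (clift_lin (gc' n)) => j dj; apply: gl.
split; first by move=> j n x dj /=; rewrite (clift_inj (hh n) (gc' n)).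
move=> u' ul' uc' n y; apply: (clift_unique (gc' n)) => j x dj; exact: uc'.
Qed.

Lemma colim_unique_map (R : pzRingType) Dm (X : int -> int -> lmodType R)
  (f : forall j j' n, X j n -> X j' n) (C : int -> lmodType R) (c : forall j n, X j n -> C n)
  (T : int -> lmodType R) (g : forall j n, X j n -> T n) (u1 u2 : forall n, C n -> T n) :
  IsColim Dm X f C c ->
  (forall j n, Dm j -> islin (g j n)) ->
  (forall j j' n x, Dm j -> Dm j' -> j <= j' -> g j' n (f j j' n x) = g j n x) ->
  (forall n, islin (u1 n)) -> (forall j n x, Dm j -> u1 n (c j n x) = g j n x) ->
  (forall n, islin (u2 n)) -> (forall j n x, Dm j -> u2 n (c j n x) = g j n x) ->
  forall n y, u1 n y = u2 n y.
Proof.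
move=> [_ [_ U]] gl gc l1 c1 l2 c2 n y.
case: (U T g gl gc) => u [_ [_ uu]].
by rewrite (uu u1) // (uu u2).
Qed.

Lemma colim_id (R : pzRingType) Dm (X : int -> int -> lmodType R)
  (f : forall j j' n, X j n -> X j' n) (C : int -> lmodType R) (c : forall j n, X j n -> C n)
  (w : forall n, C n -> C n) :
  IsColim Dm X f C c -> (forall n, islin (w n)) -> (forall j n x, Dm j -> w n (c j n x) = c j n x) ->
  forall n y, w n y = y.
Proof.
move=> HC wl wc n y.
have HC2 := HC; case: HC2 => [cl [cc _]].
apply: (colim_unique_map (T := C) (g := c) (u1 := w) (u2 := fun n y => y) HC cl cc wl wc) => //.
Qed.

Lemma colim_iso (R : pzRingType) Dm (X : int -> int -> lmodType R)
  (f : forall j j' n, X j n -> X j' n) (C : int -> lmodType R) (c : forall j n, X j n -> C n)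
  (C' : int -> lmodType R) (c' : forall j n, X j n -> C' n)
  (u : forall n, C n -> C' n) :
  IsColim Dm X f C c -> IsColim Dm X f C' c' ->
  (forall n, islin (u n)) -> (forall j n x, Dm j -> u n (c j n x) = c' j n x) ->
  forall n, bijective (u n).
Proof.
move=> HC HC' ul uc.
have HC2 := HC'; case: HC2 => [c'l [c'c U']].
case: (U' C c) => [||v [vl [vc _]]].
- by case: HC => [cl _].
- by case: HC => [_ [cc _]].
move=> n; exists (v n) => y.
  apply: (colim_id (w := fun n y => v n (u n y)) HC) => //.
  - by move=> m a x z; rewrite ul vl.
  - by move=> j m x dj; rewrite uc // vc.
apply: (colim_id (w := fun n y => u n (v n y)) HC') => //.
- by move=> m a x z; rewrite vl ul.
- by move=> j m x dj; rewrite vc // uc.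
Qed.

Lemma colim_zero (R : pzRingType) Dm (X : int -> int -> lmodType R)
  (f : forall j j' n, X j n -> X j' n) (C : int -> lmodType R) (c : forall j n, X j n -> C n)
  (K : int -> lmodType R) (k : forall j n, X j n -> K n) :
  IsColim Dm X f C c -> IsColim Dm X f K k -> (forall n (y : K n), y = 0) ->
  forall n (y : C n), y = 0.
Proof.
move=> HC HK K0 n y.
have HC2 := HC; case: HC2 => [cl [cc U]].
have HK2 := HK; case: HK2 => [kl [kc UK]].
case: (UK C c cl cc) => u [ul [uc _]].
case: (U K k kl kc) => v [vl [vc _]].
have e : u n (v n y) = y.
  apply: (colim_id (w := fun n y => u n (v n y)) HC) => //.
  - by move=> m a x z; rewrite vl ul.
  - by move=> j m x dj; rewrite vc // uc.
by rewrite -e (K0 _ (v n y)) (lin0 (ul n)).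
Qed.


End ColM.
Import ColM.

Module GenM.
Import Order.TTheory GRing.Theory Num.Theory.
Local Open Scope ring_scope.
Set Implicit Arguments.
Unset Strict Implicit.
Unset Printing Implicit Defensive.

Lemma ele_refl a : ele a a.
Proof. by case: a => //= i. Qed.
Lemma ele_trans a b c : ele a b -> ele b c -> ele a c.
Proof. case: a; case: b; case: c => //= *; lia. Qed.
Lemma ele_P a : ele a PInf. Proof. by case: a. Qed.
Lemma ele_N a : ele NInf a. Proof. by case: a. Qed.
Lemma ele_FF (i j : int) : ele (Fin i) (Fin j) = (i <= j). Proof. by []. Qed.
Lemma row_up i (j j' : int) : ele i (Fin j) -> j <= j' -> ele i (Fin j').
Proof. move=> h1 h2; apply: (ele_trans h1); rewrite /=; exact: h2. Qed.
Hint Resolve ele_refl ele_P ele_N : core.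

Lemma colim_of_sk (R : pzRingType) (Dm : int -> bool) (X : int -> int -> lmodType R)
  (f : forall j j' n, X j n -> X j' n) (C : int -> lmodType R) (c : forall j n, X j n -> C n) :
  (forall j j' : int, Dm j -> j <= j' -> Dm j') ->
  (forall j n, Dm j -> islin (c j n)) ->
  (forall j j' n x, Dm j -> Dm j' -> j <= j' -> c j' n (f j j' n x) = c j n x) ->
  (forall n y, exists j x, Dm j /\ y = c j n x) ->
  (forall j n x, Dm j -> c j n x = 0 -> exists k, j <= k /\ f j k n x = 0) ->
  IsColim Dm X f C c.
Proof.
move=> up cl cc surj ker; split=> //; split=> // T g gl gc.
have key : forall n j j' x x', Dm j -> Dm j' -> c j n x = c j' n x' -> g j n x = g j' n x'.
  move=> n j j' x x' dj dj' e.
  pose k := Num.max j j'.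
  have jk : j <= k by rewrite /k; lia.
  have j'k : j' <= k by rewrite /k; lia.
  have dk : Dm k := up _ _ dj jk.
  pose d := f j k n x - f j' k n x'.
  have cd : c k n d = 0 by rewrite /d (linB (cl _ _ dk)) !cc // e subrr.
  case: (ker _ _ _ dk cd) => l [kl fl].
  have dl : Dm l := up _ _ dk kl.
  have gd : g k n d = 0 by rewrite -(gc k l n d) // fl (lin0 (gl _ _ dl)).
  move: gd; rewrite /d (linB (gl _ _ dk)) !gc // => /eqP; rewrite subr_eq0 => /eqP //.
pose pj n y := proj1_sig (cid (surj n y)).
pose px n y := proj1_sig (cid (proj2_sig (cid (surj n y)))).
have pP : forall n y, Dm (pj n y) /\ y = c (pj n y) n (px n y).
  by move=> n y; rewrite /px /pj; case: (cid (surj n y)) => j /= hj; case: (cid hj).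
pose u n y := g (pj n y) n (px n y).
have uc : forall j n x, Dm j -> u n (c j n x) = g j n x.
  move=> j n x dj; rewrite /u; case: (pP n (c j n x)) => d e.
  by apply: key => //; rewrite -e.
exists u; split; last split=> //.
  move=> n a y z; case: (surj n y) => j1 [x1 [d1 ->]]; case: (surj n z) => j2 [x2 [d2 ->]].
  pose k := Num.max j1 j2.
  have j1k : j1 <= k by rewrite /k; lia.
  have j2k : j2 <= k by rewrite /k; lia.
  have dk : Dm k := up _ _ d1 j1k.
  rewrite -(cc j1 k n x1) // -(cc j2 k n x2) // -(cl _ _ dk) !uc // (gl _ _ dk).
  by rewrite !gc.
move=> u' ul' uc' n y; case: (surj n y) => j [x [dj ->]]; by rewrite uc' // uc.
Qed.

Section Gen.
Variables (R : pzRingType) (P Q : ext -> bool) (D D' : sysdata R)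
  (phi : forall a b n, H D a b n -> H D' a b n).
Hypotheses (hPF : forall j, P (Fin j)) (hPI : P PInf = false) (hPQ : forall a, P a -> Q a)
  (hQI : Q PInf) (HD' : is_system Q D') (Hpro : is_prolongation P D D' phi)
  (Hcc : cond_conv D').

Let eL := proj1 HD'.
Let eDL := proj1 (proj2 HD').
Let eId := proj1 (proj2 (proj2 HD')).
Let eComp := proj1 (proj2 (proj2 (proj2 HD'))).
Let eNat := proj1 (proj2 (proj2 (proj2 (proj2 HD')))).
Let eEx := proj2 (proj2 (proj2 (proj2 (proj2 HD')))).
Let pIso := proj1 Hpro.
Let pEta := proj1 (proj2 Hpro).
Let pDel := proj2 (proj2 Hpro).

Lemma QF j : Q (Fin j). Proof. exact: hPQ. Qed.
Hint Resolve QF hQI : core.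

Lemma tail_hyp n : colhyp (fun _ => true) (fun s => H D' (Fin s) PInf n)
   (fun s t => eta D' (Fin s) PInf (Fin t) PInf n).
Proof.
apply: ColHyp.
- by [].
- by exists 0.
- by move=> j j' _ jj; apply: eL.
- by move=> j k l x _ jk kl; apply: eComp => //=; lia.
Qed.

Lemma EZ s n (z : H D' (Fin s) PInf n) :
  exists t, s <= t /\ eta D' (Fin s) PInf (Fin t) PInf n z = 0.
Proof.
have HC := IsColim_Col tail_hyp.
have Hcc2 : forall C c, IsColim _ _ _ C c -> forall n (y : C n), y = 0 := Hcc.
have e := Hcc2 _ _ HC n (cinj (tail_hyp n) s z).
have [m hm] := @cinj_ker _ _ _ _ (tail_hyp n) s z (erefl true) e.
exists (Num.max m s); split; first by lia.
by apply: hm; lia.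
Qed.

Lemma row_surj i n (y : H D' i PInf n) : P i ->
  exists j x, row_dom i j /\ y = row_cocone D D' phi i j n x.
Proof.
move=> Pi.
have [s is_] : exists s, ele i (Fin s).
  by case: i Pi y => [|i0|] Pi y; [exists 0 | exists i0 => /= | rewrite hPI in Pi].
have Qi := hPQ Pi.
case: (EZ (eta D' i PInf (Fin s) PInf n y)) => t [st e].
rewrite eComp //= in e.
have it : ele i (Fin t) by apply: row_up is_ st.
case: ((proj1 (eEx Qi (QF t) hQI it (ele_P _))) n y) => /(_ e) [x' ex'].
case: (proj2 (pIso n Pi (hPF t) it)) => ph g1 g2.
exists t, (ph x'); split=> //.
by rewrite /row_cocone g2.
Qed.

Lemma row_ker i j n x : P i -> row_dom i j -> row_cocone D D' phi i j n x = 0 ->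
  exists k, j <= k /\ eta D i (Fin j) i (Fin k) n x = 0.
Proof.
move=> Pi ij e; have Qi := hPQ Pi; rewrite /row_cocone in e.
case: ((proj2 (proj2 (eEx Qi (QF j) hQI ij (ele_P _)))) n (@phi i (Fin j) n x)).
move=> /(_ e) [w ew] _.
case: (EZ w) => t [jt et].
case: ((proj1 (eEx (QF j) (QF t) hQI jt (ele_P _))) (n + 1) w).
move=> /(_ et) [v ev] _.
have it : ele i (Fin t) by apply: row_up ij jt.
exists t; split=> //.
have e2 : @phi i (Fin j) n x = del D' i (Fin j) (Fin t) n v.
  have E := @eNat i (Fin j) (Fin t) i (Fin j) PInf n v Qi (QF j) (QF t) Qi (QF j) hQI ij jt ij (ele_P _) (ele_refl _) (ele_refl _) (ele_P _).
  by rewrite eId // in E; rewrite -ew -ev -E.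
have e3 : eta D' i (Fin j) i (Fin t) n (@phi i (Fin j) n x) = 0.
  rewrite e2; apply/(proj2 (proj2 (eEx Qi (QF j) (QF t) ij jt)) n _).
  by exists v.
rewrite -pEta // in e3.
case: (pIso n Pi (hPF t) it) => l [g g1 g2].
by rewrite -(g1 (eta D i (Fin j) i (Fin t) n x)) e3 -{1}(lin0 l) g1.
Qed.
Lemma lin_comp (U V W : lmodType R) (g1 : U -> V) (g2 : V -> W) :
  islin g1 -> islin g2 -> islin (fun x => g2 (g1 x)).
Proof. by move=> l1 l2 a x y; rewrite l1 l2. Qed.

Lemma row_colim i : P i ->
  IsColim (row_dom i) (fun j => H D i (Fin j)) (fun j j' => eta D i (Fin j) i (Fin j'))
          (H D' i PInf) (row_cocone D D' phi i).
Proof.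
move=> Pi; have Qi := hPQ Pi.
apply: colim_of_sk.
- by move=> j j' ij jj; apply: row_up ij jj.
- move=> j n ij; apply: lin_comp; first by case: (pIso n Pi (hPF j) ij).
  by apply: eL.
- move=> j j' n x ij ij' jj; rewrite /row_cocone pEta //.
  by rewrite eComp.
- by move=> n y; apply: row_surj.
- by move=> j n x ij e; apply: row_ker.
Qed.

Lemma uniq_part i : P i ->
  forall (C : int -> lmodType R) (c : forall (j n : int), H D i (Fin j) n -> C n),
    IsColim (row_dom i) (fun j => H D i (Fin j))
            (fun j j' => eta D i (Fin j) i (Fin j')) C c ->
  forall u : forall n, C n -> H D' i PInf n,
    (forall n, islin (u n)) ->
    (forall j n x, row_dom i j -> u n (c j n x) = row_cocone D D' phi i j n x) ->
    forall n, bijective (u n).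
Proof.
move=> Pi C c HC u ul uc; exact: (colim_iso HC (row_colim Pi) ul uc).
Qed.
End Gen.

End GenM.
Import GenM.

Module MainM.
Unset Implicit Arguments.
Import Order.TTheory GRing.Theory Num.Theory.
Local Open Scope ring_scope.
Unset Strict Implicit.
Unset Printing Implicit Defensive.

Section Main.
Variables (R : pzRingType) (P : ext -> bool) (D : sysdata R).
Hypotheses (HD : is_system P D) (hPF : forall j, P (Fin j)) (hPI : P PInf = false).

Local Set Implicit Arguments.
Let eL := proj1 HD.
Let eDL := proj1 (proj2 HD).
Let eId := proj1 (proj2 (proj2 HD)).
Let eComp := proj1 (proj2 (proj2 (proj2 HD))).
Let eNat := proj1 (proj2 (proj2 (proj2 (proj2 HD)))).
Let eEx := proj2 (proj2 (proj2 (proj2 (proj2 HD)))).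
Local Unset Implicit Arguments.
Hint Resolve hPF ele_refl ele_P ele_N : core.

Definition domR a (j : int) := if P a then ele a (Fin j) else true.
Definition XR a n := fun j => H D a (Fin j) n.
Definition fR a n := fun (j j' : int) (x : H D a (Fin j) n) =>
  (if P a then eta D a (Fin j) a (Fin j') n x else 0 : H D a (Fin j') n).

Lemma hR a n : colhyp (domR a) (XR a n) (fR a n).
Proof.
rewrite /domR /fR /XR; case Pa: (P a); last first.
  apply: ColHyp.
  - by [].
  - by exists 0.
  - by move=> j j' _ _ b x y; rewrite scaler0 addr0.
  - by [].
apply: ColHyp.
- by move=> j j' ij jj; apply: row_up ij jj.
- case: a Pa => [|i|] Pa.
  + by exists 0.
  + by exists i; rewrite /=.
  + by rewrite hPI in Pa.
- move=> j j' ij jj /=; apply: eL => //; exact: row_up ij jj.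
- move=> j k l x ij jk kl /=; apply: eComp => //.
  all: first [exact: (row_up ij jk) | exact: (row_up ij (le_trans jk kl))].
Qed.

Definition L a n : lmodType R := Col (hR a n).
Definition ij a n (j : int) : H D a (Fin j) n -> L a n := cinj (hR a n) j.

Definition bi (b : ext) : int := if b is Fin j then j else 0.
Definition idx (b c : ext) : int := Num.max (bi b) (bi c).

Definition etaF a b c n (x : H D a b n) : L c n :=
  ij c n (idx b c) (eta D a b c (Fin (idx b c)) n x).
Definition colmap a c n : L a n -> L c n :=
  clift (hR a n) (fun j x => etaF a (Fin j) c n x).
Definition delL a b n : L b (n + 1) -> H D a b n :=
  clift (hR b (n + 1)) (fun j x => del D a b (Fin j) n x).

Definition Hp (a b : ext) (n : int) : lmodType R :=
  match b with PInf => L a n | _ => H D a b n end.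

Definition etaB a b c d n : H D a b n -> Hp c d n :=
  match d as d0 return H D a b n -> Hp c d0 n with
  | PInf => etaF a b c n
  | NInf => eta D a b c NInf n
  | Fin k => eta D a b c (Fin k) n
  end.

Definition etap a b c d n : Hp a b n -> Hp c d n :=
  match b as b0 return Hp a b0 n -> Hp c d n with
  | PInf => match d as d0 return L a n -> Hp c d0 n with
            | PInf => colmap a c n
            | NInf => fun _ => (0 : H D c NInf n)
            | Fin k => fun _ => (0 : H D c (Fin k) n)
            end
  | NInf => etaB a NInf c d n
  | Fin j => etaB a (Fin j) c d n
  end.

Definition delB a b c n : H D b c (n + 1) -> Hp a b n :=
  match b as b0 return H D b0 c (n + 1) -> Hp a b0 n with
  | PInf => fun _ => (0 : L a n)
  | NInf => del D a NInf c n
  | Fin k => del D a (Fin k) c n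
  end.

Definition delp a b c n : Hp b c (n + 1) -> Hp a b n :=
  match c as c0 return Hp b c0 (n + 1) -> Hp a b n with
  | PInf => match b as b0 return L b0 (n + 1) -> Hp a b0 n with
            | PInf => fun _ => (0 : L a n)
            | NInf => delL a NInf n
            | Fin k => delL a (Fin k) n
            end
  | NInf => delB a b NInf n
  | Fin k => delB a b (Fin k) n
  end.

Definition phip a b n : H D a b n -> Hp a b n :=
  match b as b0 return H D a b0 n -> Hp a b0 n with
  | PInf => fun _ => (0 : L a n)
  | NInf => id
  | Fin _ => id
  end.

Definition D' : sysdata R := @SysData R Hp etap delp.


Lemma PnI a : P a -> a <> PInf.
Proof. by move=> Pa e; rewrite e hPI in Pa. Qed.

Lemma dom_P a j : P a -> domR a j = ele a (Fin j).
Proof. by rewrite /domR => ->. Qed.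
Lemma fR_P a n j j' x : P a -> fR a n j j' x = eta D a (Fin j) a (Fin j') n x.
Proof. by rewrite /fR => ->. Qed.

Lemma ij_lin a n j : P a -> ele a (Fin j) -> islin (ij a n j).
Proof. move=> Pa aj; have d : domR a j by rewrite dom_P. exact: (cinj_lin (hR a n) d). Qed.
Lemma ij_compat a n j j' x : P a -> ele a (Fin j) -> j <= j' ->
  ij a n j' (eta D a (Fin j) a (Fin j') n x) = ij a n j x.
Proof. move=> Pa aj jj; have d : domR a j by rewrite dom_P.
rewrite -(fR_P a n j j' x Pa); exact: (cinj_compat (hR a n) x d jj). Qed.
Lemma ij_surj a n (y : L a n) : P a -> exists j x, ele a (Fin j) /\ y = ij a n j x.
Proof. move=> Pa; case: (cinj_surj y) => j [x [dj ->]]; exists j, x; by rewrite -dom_P. Qed.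
Lemma ij_ker a n j x : P a -> ele a (Fin j) -> ij a n j x = 0 ->
  exists m, forall k, m <= k -> j <= k -> eta D a (Fin j) a (Fin k) n x = 0.
Proof.
move=> Pa aj e; have d : domR a j by rewrite dom_P.
case: (cinj_ker d e) => m hm; exists m => k mk jk; by rewrite -(fR_P a n j k x Pa) hm.
Qed.

Lemma L0 n (y : L PInf n) : y = 0.
Proof.
case: (cinj_surj y) => j [x [dj ->]].
have jj : j <= j + 1 by lia.
have e := cinj_compat (hR PInf n) x dj jj.
have fz : fR PInf n j (j + 1) x = 0 by rewrite /fR hPI.
rewrite fz in e; rewrite -e; apply: lin0; apply: (cinj_lin (hR PInf n)); by rewrite /domR hPI.
Qed.
Lemma L0eq n (y z : L PInf n) : y = z.
Proof. by rewrite (L0 n y) (L0 n z). Qed.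

Lemma Hdiag0 a n (y : H D a a n) : P a -> y = 0.
Proof.
move=> Pa; have [E1 _] := eEx Pa Pa Pa (ele_refl a) (ele_refl a).
have := proj2 (E1 n y); rewrite eId // => -> //; by exists y; rewrite eId.
Qed.

Lemma idx_b b c : P b -> ele b (Fin (idx b c)).
Proof. case: b => [|j|] //= Pb; [rewrite /idx /=; lia | by rewrite hPI in Pb]. Qed.
Lemma idx_c b c : P c -> ele c (Fin (idx b c)).
Proof. case: c => [|j|] //= Pc; [rewrite /idx /=; lia | by rewrite hPI in Pc]. Qed.

Lemma etaF_spec a b c n x (k : int) : P a -> P b -> P c -> ele a b -> ele a c ->
  ele b (Fin k) -> ele c (Fin k) -> etaF a b c n x = ij c n k (eta D a b c (Fin k) n x).
Proof.
move=> Pa Pb Pc ab ac bk ck; rewrite /etaF.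
pose m := Num.max (idx b c) k.
have i1 : idx b c <= m by rewrite /m; lia.
have i2 : k <= m by rewrite /m; lia.
have bi1 := idx_b b c Pb; have ci1 := idx_c b c Pc.
rewrite -(ij_compat c n _ _ _ Pc ci1 i1) -(ij_compat c n _ _ _ Pc ck i2).
rewrite !eComp //.
all: try exact: row_up bk i2; try exact: row_up ck i2; try exact: row_up bi1 i1; try exact: row_up ci1 i1.
Qed.

Lemma etaF_lin a b c n : P a -> P b -> P c -> ele a b -> ele a c -> islin (etaF a b c n).
Proof.
move=> Pa Pb Pc ab ac; rewrite /etaF; apply: lin_comp.
  apply: eL => //; [exact: idx_c | exact: idx_b].
exact: ij_lin (idx_c b c Pc).
Qed.

Lemma colmap_gc a c n : P a -> P c -> ele a c ->
  forall (j j' : int) x, domR a j -> j <= j' ->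
  etaF a (Fin j') c n (fR a n j j' x) = etaF a (Fin j) c n x.
Proof.
move=> Pa Pc ac j j' x dj jj; rewrite dom_P // in dj; rewrite fR_P //.
have aj' := row_up dj jj.
pose k := idx (Fin j') c.
have j'k := idx_b (Fin j') c (hPF j'); have ck := idx_c (Fin j') c Pc.
rewrite (etaF_spec a (Fin j') c n _ k) // (etaF_spec a (Fin j) c n _ k) //; last first.
  exact: ele_trans (jj : ele (Fin j) (Fin j')) j'k.
by rewrite eComp.
Qed.

Lemma colmap_ij a c n j x : P a -> P c -> ele a c -> ele a (Fin j) ->
  colmap a c n (ij a n j x) = etaF a (Fin j) c n x.
Proof.
move=> Pa Pc ac aj; rewrite /colmap /ij (clift_inj (hR a n) (colmap_gc a c n Pa Pc ac)) //.
by rewrite dom_P.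
Qed.

Lemma colmap_lin a c n : P a -> P c -> ele a c -> islin (colmap a c n).
Proof.
move=> Pa Pc ac; apply: (clift_lin (colmap_gc a c n Pa Pc ac)) => j dj.
rewrite dom_P // in dj; exact: etaF_lin.
Qed.

Lemma delL_gc a b n : P a -> P b -> ele a b ->
  forall (j j' : int) x, domR b j -> j <= j' ->
  del D a b (Fin j') n (fR b (n + 1) j j' x) = del D a b (Fin j) n x.
Proof.
move=> Pa Pb ab j j' x dj jj; rewrite dom_P // in dj; rewrite fR_P //.
have bj' := row_up dj jj.
have E := @eNat a b (Fin j) a b (Fin j') n x Pa Pb (hPF j) Pa Pb (hPF j') ab dj ab bj' (ele_refl a) (ele_refl b) jj.
by rewrite eId // in E; rewrite -E.
Qed.

Lemma delL_ij a b n j x : P a -> P b -> ele a b -> ele b (Fin j) ->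
  delL a b n (ij b (n + 1) j x) = del D a b (Fin j) n x.
Proof.
move=> Pa Pb ab bj; rewrite /delL /ij (clift_inj (hR b (n + 1)) (delL_gc a b n Pa Pb ab)) //.
by rewrite dom_P.
Qed.

Lemma delL_lin a b n : P a -> P b -> ele a b -> islin (delL a b n).
Proof.
move=> Pa Pb ab; apply: (clift_lin (delL_gc a b n Pa Pb ab)) => j dj.
rewrite dom_P // in dj; apply: eDL => //.
Qed.

Definition Qd (a : ext) : bool := P a || (if a is PInf then true else false).

Lemma QP a : Qd a -> a <> PInf -> P a.
Proof. rewrite /Qd; case: a => [|j|] /=; rewrite ?orbF // => _ h; by case: h. Qed.
Lemma QNP : Qd NInf -> P NInf. Proof. by rewrite /Qd orbF. Qed.
Lemma QlP a b : Qd a -> ele a b -> b <> PInf -> P a.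
Proof. by move=> Qa ab bP; apply: QP Qa _ => e; subst a; case: b ab bP. Qed.
Lemma QPI : Qd PInf. Proof. by rewrite /Qd orbT. Qed.
Lemma PQ a : P a -> Qd a. Proof. by rewrite /Qd => ->. Qed.

Lemma ext_dec (c : ext) : c = PInf \/ c <> PInf.
Proof. by case: c; [right | right | left]. Qed.

Ltac Pfin := first [ assumption | exact: hPF | exact: QNP | exact: QPI | exact: PQ ].

Lemma lin_etap a b c d n : Qd a -> Qd b -> Qd c -> Qd d -> ele a b -> ele c d -> ele a c ->
  ele b d -> islin (etap a b c d n).
Proof.
move=> Qa Qb Qc Qd_ ab cd ac bd.
case: b Qb ab bd => [|j|] Qb ab bd; case: d Qd_ cd bd => [|k|] Qd_ cd bd //=.
- have Pa := QlP a NInf Qa ab ltac:(discriminate).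
  have Pc := QlP c NInf Qc cd ltac:(discriminate).
  by apply: eL => //; exact: QNP.
- have Pa := QlP a NInf Qa ab ltac:(discriminate).
  have Pc := QlP c (Fin k) Qc cd ltac:(discriminate).
  by apply: eL => //; exact: QNP.
- have Pa := QlP a NInf Qa ab ltac:(discriminate).
  case: (ext_dec c) => [->|cP]; first by move=> s x y; apply: L0eq.
  apply: etaF_lin => //; [exact: QNP | exact: QP].
- have Pa := QlP a (Fin j) Qa ab ltac:(discriminate).
  have Pc := QlP c (Fin k) Qc cd ltac:(discriminate).
  by apply: eL.
- have Pa := QlP a (Fin j) Qa ab ltac:(discriminate).
  case: (ext_dec c) => [->|cP]; first by move=> s x y; apply: L0eq.
  apply: etaF_lin => //; exact: QP.
- case: (ext_dec c) => [->|cP]; first by move=> s x y; apply: L0eq.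
  have Pc := QP c Qc cP.
  have Pa := QlP a c Qa ac cP.
  exact: colmap_lin.
Qed.

Lemma lin_delp a b c n : Qd a -> Qd b -> Qd c -> ele a b -> ele b c -> islin (delp a b c n).
Proof.
move=> Qa Qb Qc ab bc.
case: c Qc bc => [|k|] Qc bc; case: b Qb ab bc => [|j|] Qb ab bc //=.
- have Pa := QlP a NInf Qa ab ltac:(discriminate).
  by apply: eDL => //; exact: QNP.
- have Pa := QlP a NInf Qa ab ltac:(discriminate).
  by apply: eDL => //; exact: QNP.
- have Pa := QlP a (Fin j) Qa ab ltac:(discriminate).
  by apply: eDL.
- have Pa := QlP a NInf Qa ab ltac:(discriminate).
  by apply: delL_lin => //; exact: QNP.
- have Pa := QlP a (Fin j) Qa ab ltac:(discriminate).
  by apply: delL_lin.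
- by move=> s x y; rewrite scaler0 addr0.
Qed.

Lemma bi_ele b (k : int) : P b -> bi b <= k -> ele b (Fin k).
Proof. case: b => //= Pb; by rewrite hPI in Pb. Qed.

Lemma bound3 b c e : P b -> P c -> P e ->
  exists k : int, ele b (Fin k) /\ ele c (Fin k) /\ ele e (Fin k).
Proof.
move=> Pb Pc Pe; exists (Num.max (bi b) (Num.max (bi c) (bi e))).
split; [|split]; apply: bi_ele => //; lia.
Qed.

Lemma id_etap a b n x : Qd a -> Qd b -> ele a b -> etap a b a b n x = x.
Proof.
move=> Qa Qb ab; case: b Qb ab x => [|j|] Qb ab x /=.
- have Pa := QlP a NInf Qa ab ltac:(discriminate).
  by apply: eId => //; exact: QNP.
- have Pa := QlP a (Fin j) Qa ab ltac:(discriminate).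
  by apply: eId.
- case: (ext_dec a) => [e|aP]; first by subst a; apply: L0eq.
  have Pa := QP a Qa aP.
  case: (ij_surj a n x Pa) => j [z [aj ->]].
  rewrite colmap_ij // (etaF_spec a (Fin j) a n z j) //.
  by rewrite eId.
Qed.

Lemma etaF_eta a b c d e n x : P a -> P b -> P c -> P d -> P e ->
  ele a b -> ele c d -> ele a c -> ele b d -> ele c e ->
  etaF c d e n (eta D a b c d n x) = etaF a b e n x.
Proof.
move=> Pa Pb Pc Pd Pe ab cd ac bd ce.
have [k [bk [dk ek]]] := bound3 b d e Pb Pd Pe.
rewrite (etaF_spec c d e n _ k) // (etaF_spec a b e n _ k) //; last exact: ele_trans ac ce.
by rewrite eComp //; exact: ele_trans ce ek.
Qed.

Lemma colmap_etaF a b c e n x : P a -> P b -> P c -> P e -> ele a b -> ele a c -> ele c e ->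
  colmap c e n (etaF a b c n x) = etaF a b e n x.
Proof.
move=> Pa Pb Pc Pe ab ac ce.
have [k [bk [ck ek]]] := bound3 b c e Pb Pc Pe.
rewrite (etaF_spec a b c n x k) // colmap_ij // (etaF_spec c (Fin k) e n _ k) //.
rewrite (etaF_spec a b e n x k) //; last exact: ele_trans ac ce.
by rewrite eComp.
Qed.

Lemma ele_nP x y : ele x y -> y <> PInf -> x <> PInf.
Proof. by case: x; case: y. Qed.

Ltac solveP := match goal with
 | |- is_true (P (Fin _)) => exact: hPF
 | H : is_true (Qd NInf) |- is_true (P NInf) => exact: QNP H
 | Q : is_true (Qd ?x), E : is_true (ele ?x NInf) |- is_true (P ?x) =>
     exact: (QlP x NInf Q E ltac:(discriminate))
 | Q : is_true (Qd ?x), E : is_true (ele ?x (Fin ?k)) |- is_true (P ?x) =>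
     exact: (QlP x (Fin k) Q E ltac:(discriminate))
 | Q : is_true (Qd ?x), E : ?x <> PInf |- is_true (P ?x) => exact: (QP x Q E)
 | Q : is_true (Qd ?x), E : is_true (ele ?x ?y), F : ?y <> PInf |- is_true (P ?x) =>
     exact: (QlP x y Q E F)
 end.

Lemma comp_etap a b c d e f n x : Qd a -> Qd b -> Qd c -> Qd d -> Qd e -> Qd f ->
  ele a b -> ele c d -> ele e f -> ele a c -> ele b d -> ele c e -> ele d f ->
  etap c d e f n (etap a b c d n x) = etap a b e f n x.
Proof.
move=> Qa Qb Qc Qd_ Qe Qf ab cd ef ac bd ce df.
case: b Qb ab bd x => [|j|] Qb ab bd x; case: d Qd_ cd bd df => [|k|] Qd_ cd bd df;
  case: f Qf ef df => [|l|] Qf ef df //=.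
all: try (apply: eComp => //; solveP).
all: case: e Qe ef ce => [|m|] Qe ef ce; try (by apply: L0eq).
all: lazymatch type of Qe with is_true (Qd ?E) => have eP : E <> PInf by discriminate end.
all: have cP := ele_nP _ _ ce eP.
all: have aP := ele_nP _ _ ac cP.
all: try (apply: etaF_eta => //; solveP).
all: try (apply: colmap_etaF => //; solveP).
all: have Pa : P a by solveP.
all: have Pc : P c by solveP.
all: have Pe : P _ := QP _ Qe eP.
all: case: (ij_surj a n x Pa) => j [z [aj ->]].
all: rewrite (colmap_ij a c n j z) // (colmap_ij a _ n j z) //; try exact: ele_trans ac ce.
all: by apply: colmap_etaF.
Qed.

Lemma natB a b c a' b' n x : P a -> P b -> P c -> P a' -> P b' ->
  ele a b -> ele b c -> ele a' b' -> ele a a' -> ele b b' ->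
  eta D a b a' b' n (del D a b c n x) = delL a' b' n (etaF b c b' (n + 1) x).
Proof.
move=> Pa Pb Pc Pa' Pb' ab bc a'b' aa' bb'.
have [k [ck [b'k _]]] := bound3 c b' b' Pc Pb' Pb'.
rewrite (etaF_spec b c b' (n + 1) x k) // delL_ij //.
by apply: eNat => //; exact: ele_trans bc ck.
Qed.

Lemma natC a b c a' n x : P a -> P b -> P c -> P a' ->
  ele a b -> ele b c -> ele a a' ->
  etaF a b a' n (del D a b c n x) = 0.
Proof.
move=> Pa Pb Pc Pa' ab bc aa'.
have [k [ck [a'k bk]]] := bound3 c a' b Pc Pa' Pb.
rewrite (etaF_spec a b a' n _ k) //.
have E := @eNat a b c a' (Fin k) (Fin k) n x Pa Pb Pc Pa' (hPF k) (hPF k) ab bc a'k (ele_refl _) aa' bk ck.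
rewrite E (Hdiag0 (Fin k) (n + 1) (eta D b c (Fin k) (Fin k) (n + 1) x) (hPF k)).
rewrite (lin0 (@eDL a' (Fin k) (Fin k) n Pa' (hPF k) (hPF k) a'k (ele_refl _))).
exact: (lin0 (ij_lin a' n k Pa' a'k)).
Qed.

Lemma nat_delp a b c a' b' c' n x : Qd a -> Qd b -> Qd c -> Qd a' -> Qd b' -> Qd c' ->
  ele a b -> ele b c -> ele a' b' -> ele b' c' -> ele a a' -> ele b b' -> ele c c' ->
  etap a b a' b' n (delp a b c n x) = delp a' b' c' n (etap b c b' c' (n + 1) x).
Proof.
move=> Qa Qb Qc Qa' Qb' Qc' ab bc a'b' b'c' aa' bb' cc'.
case: c Qc bc cc' x => [|k|] Qc bc cc' x; case: b Qb ab bc bb' x => [|j|] Qb ab bc bb' x;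
  case: c' Qc' b'c' cc' => [|k'|] Qc' b'c' cc'; case: b' Qb' a'b' bb' b'c' => [|j'|] Qb' a'b' bb' b'c' //=.
all: try (apply: eNat => //; solveP).
all: try (apply: natB => //; solveP).
all: case: a' Qa' a'b' aa' => [|m|] Qa' a'b' aa'; try (by apply: L0eq); try done.
all: try (apply: natC => //; solveP).
all: try (apply: lin0; apply: colmap_lin => //; solveP).
all: lazymatch type of Qb with is_true (Qd ?B) => have PB : P B by solveP end.
all: case: (ij_surj _ _ x PB) => i0 [w [bi0 ->]].
all: rewrite delL_ij //; try solveP.
all: try (apply: natC => //; solveP).
all: rewrite colmap_ij //; try solveP.
all: apply: natB => //; solveP.
Qed.

Section Ex.
Variables (a b : ext).
Hypotheses (Pa : P a) (Pb : P b) (ab : ele a b).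

Lemma E1 n (y : L a n) : colmap a b n y = 0 <-> exists x : H D a b n, etaF a b a n x = y.
Proof.
split.
- case: (ij_surj a n y Pa) => j [z [aj ->]].
  pose j' := Num.max j (bi b).
  have jj' : j <= j' by rewrite /j'; lia.
  have bj' : ele b (Fin j') by apply: bi_ele => //; rewrite /j'; lia.
  have aj' := row_up aj jj'.
  rewrite -(ij_compat a n j j' z Pa aj jj').
  set z' := eta D a (Fin j) a (Fin j') n z.
  rewrite colmap_ij // (etaF_spec a (Fin j') b n z' j') // => e.
  case: (ij_ker b n j' _ Pb bj' e) => m hm.
  pose k := Num.max m j'.
  have j'k : j' <= k by rewrite /k; lia.
  have := hm k ltac:(rewrite /k; lia) j'k.
  have ak := row_up aj' j'k; have bk := row_up bj' j'k.
  rewrite eComp // -(@eComp a (Fin j') a (Fin k) b (Fin k) n z') //.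
  set z'' := eta D a (Fin j') a (Fin k) n z' => e2.
  case: ((proj1 (eEx Pa Pb (hPF k) ab bk)) n z'') => /(_ e2) [x ex] _.
  exists x; rewrite -(ij_compat a n j' k z' Pa aj' j'k) -/z'' -ex.
  by rewrite (etaF_spec a b a n x k).
- case=> x <-.
  have [k [bk _]] := bound3 b b b Pb Pb Pb.
  rewrite colmap_etaF // (etaF_spec a b b n x k) //.
  rewrite -(@eComp a b b b b (Fin k) n x) //.
  rewrite (Hdiag0 b n (eta D a b b b n x) Pb) (lin0 (@eL b b b (Fin k) n Pb Pb Pb (hPF k) (ele_refl b) bk (ele_refl b) bk)) //.
  exact: (lin0 (ij_lin b n k Pb bk)).
Qed.

Lemma E2 n (y : L b (n + 1)) : delL a b n y = 0 <-> exists x : L a (n + 1), colmap a b (n + 1) x = y.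
Proof.
split.
- case: (ij_surj b (n + 1) y Pb) => j [w [bj ->]].
  rewrite delL_ij // => e.
  have aj := ele_trans ab bj.
  case: ((proj1 (proj2 (eEx Pa Pb (hPF j) ab bj))) n w) => /(_ e) [z ez] _.
  exists (ij a (n + 1) j z); rewrite colmap_ij // (etaF_spec a (Fin j) b (n + 1) z j) //.
  by rewrite ez.
- case=> x <-.
  case: (ij_surj a (n + 1) x Pa) => j [z [aj ->]].
  have [k [jk [bk _]]] := bound3 (Fin j) b b (hPF j) Pb Pb.
  have ak := ele_trans aj jk.
  rewrite colmap_ij // (etaF_spec a (Fin j) b (n + 1) z k) // delL_ij //.
  rewrite -(@eComp a (Fin j) a (Fin k) b (Fin k) (n + 1) z) //.
  apply/((proj1 (proj2 (eEx Pa Pb (hPF k) ab bk))) n).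
  by eexists.
Qed.

Lemma E3 n (y : H D a b n) : etaF a b a n y = 0 <-> exists x : L b (n + 1), delL a b n x = y.
Proof.
split.
- have [k0 [bk0 _]] := bound3 b b b Pb Pb Pb.
  have ak0 := ele_trans ab bk0.
  rewrite (etaF_spec a b a n y k0) // => e.
  case: (ij_ker a n k0 _ Pa ak0 e) => m hm.
  pose k := Num.max m k0.
  have k0k : k0 <= k by rewrite /k; lia.
  have := hm k ltac:(rewrite /k; lia) k0k.
  have bk := row_up bk0 k0k; have ak := row_up ak0 k0k.
  rewrite eComp // => e2.
  case: ((proj2 (proj2 (eEx Pa Pb (hPF k) ab bk))) n y) => /(_ e2) [w ew] _.
  exists (ij b (n + 1) k w); by rewrite delL_ij.
- case=> x <-.
  case: (ij_surj b (n + 1) x Pb) => j [w [bj ->]].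
  have aj := ele_trans ab bj.
  rewrite delL_ij // (etaF_spec a b a n _ j) //.
  have -> : eta D a b a (Fin j) n (del D a b (Fin j) n w) = 0.
    apply/((proj2 (proj2 (eEx Pa Pb (hPF j) ab bj))) n); by exists w.
  exact: (lin0 (ij_lin a n j Pa aj)).
Qed.
End Ex.

Lemma ex_D' a b c : Qd a -> Qd b -> Qd c -> ele a b -> ele b c ->
  (forall n (y : Hp a c n), etap a c b c n y = 0 <-> exists x : Hp a b n, etap a b a c n x = y) /\
  (forall n (y : Hp b c (n + 1)), delp a b c n y = 0 <->
      exists x : Hp a c (n + 1), etap a c b c (n + 1) x = y) /\
  (forall n (y : Hp a b n), etap a b a c n y = 0 <-> exists x : Hp b c (n + 1), delp a b c n x = y).
Proof.
move=> Qa Qb Qc ab bc.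
case: c Qc bc => [|k|] Qc bc; case: b Qb ab bc => [|j|] Qb ab bc //=.
- have Pa : P a by solveP.
  by apply: eEx => //; exact: QNP.
- have Pa : P a by solveP.
  by apply: eEx => //; exact: QNP.
- have Pa : P a by solveP.
  by apply: eEx.
- have Pa : P a by solveP.
  have Pb : P NInf by exact: QNP.
  by split; [|split]=> n y; [apply: E1 | apply: E2 | apply: E3].
- have Pa : P a by solveP.
  by split; [|split]=> n y; [apply: E1 | apply: E2 | apply: E3].
- split; [|split] => n y.
  + split=> _; last by apply: L0eq.
    by exists y; rewrite [LHS](id_etap a PInf n y Qa QPI (ele_P a)).
  + split=> _ //; exists (0 : L a (n + 1)); exact: L0eq.
  + rewrite [LHS](id_etap a PInf n y Qa QPI (ele_P a)); split.
      by move=> ->; exists (0 : L PInf (n + 1)).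
    by case=> x <-.
Qed.

Lemma sys_D' : is_system Qd D'.
Proof.
split; first by move=> *; apply: lin_etap.
split; first by move=> *; apply: lin_delp.
split; first by move=> *; apply: id_etap.
split; first by move=> *; apply: comp_etap.
split; first by move=> *; apply: nat_delp.
by move=> *; apply: ex_D'.
Qed.

Lemma pro_D' : is_prolongation P D D' phip.
Proof.
split.
  move=> a b n Pa Pb ab; case: b Pb ab => [|j|] Pb ab /=.
  - by split; [move=> s x y | exists id].
  - by split; [move=> s x y | exists id].
  - by rewrite hPI in Pb.
split.
  move=> a b c d n x Pa Pb Pc Pd ab cd ac bd.
  case: b Pb ab bd x => [|j|] Pb ab bd x; case: d Pd cd bd => [|k|] Pd cd bd //=;
    by rewrite hPI in Pd.
move=> a b c n x Pa Pb Pc ab bc.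
case: b Pb ab bc x => [|j|] Pb ab bc x; case: c Pc bc x => [|k|] Pc bc x //=;
  by rewrite hPI in Pc.
Qed.

Lemma QdF j : Qd (Fin j). Proof. exact: PQ. Qed.

Lemma cc_D' : cond_conv D'.
Proof.
move=> C c HC.
have HK := IsColim_Col (tail_hyp hPF PQ QPI sys_D').
apply: (colim_zero HC HK) => n y.
case: (cinj_surj y) => s [x [_ ->]].
case: (ij_surj (Fin s) n x (hPF s)) => j [z [sj ->]].
have e := cinj_compat (tail_hyp hPF PQ QPI sys_D' n) (ij (Fin s) n j z) (erefl true) (sj : s <= j).
rewrite -e /=.
rewrite colmap_ij // (etaF_spec (Fin s) (Fin j) (Fin j) n z j) //.
rewrite (Hdiag0 (Fin j) n (eta D (Fin s) (Fin j) (Fin j) (Fin j) n z) (hPF j)).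
rewrite (lin0 (ij_lin (Fin j) n j (hPF j) (ele_refl _))).
exact: (lin0 (cinj_lin (tail_hyp hPF PQ QPI sys_D' n) (erefl true))).
Qed.
End Main.
End MainM.
Import MainM.

Unset Implicit Arguments.

Lemma main_gen (R : pzRingType) (P Q : ext -> bool) (D : sysdata R) :
  is_system P D -> (forall j, P (Fin j)) -> P PInf = false -> (forall a, Qd P a = Q a) ->
  prolongation_statement P Q D.
Proof.
move=> HD hPF hPI hQ.
have eQ : Qd P = Q by apply: funext.
have hPQ : forall a, P a -> Q a by move=> a Pa; rewrite -hQ /Qd Pa.
have hQI : Q PInf by rewrite -hQ /Qd orbT.
split.
  exists (D' R P D HD hPF hPI), (phip R P D HD hPF hPI).
  have S := sys_D' R P D HD hPF hPI; rewrite eQ in S.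
  have Pr := pro_D' R P D HD hPF hPI.
  have Cc := cc_D' R P D HD hPF hPI.
  split=> //; split=> //; split=> // i Pi.
  exact: (row_colim hPF hPI hPQ hQI S Pr Cc Pi).
move=> D2 phi HD2 Hpro Hcc i Pi C c HC u ul uc.
exact: (uniq_part hPF hPI hPQ hQI HD2 Hpro Hcc Pi HC ul uc).
Qed.

Theorem lemma6p5 (R : pzRingType) :
  (forall D : sysdata R, CE_system D ->
     prolongation_statement isFin notNInf D) /\
  (forall D : sysdata R, left_CE_system D ->
     prolongation_statement notPInf allExt D).
Proof.
split=> D HD.
  by apply: main_gen => // a; case: a.
by apply: main_gen => // a; case: a => //= *; rewrite orbF.
Qed.
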